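(* Let $\Sigma$ be an alphabet and $n\ge 1$ a natural number. There exist $n$ nondeterministic finite automata $A_1,\dots,A_n$, each with six states, such that $P\big(L_m(A_1\|A_2\|\cdots\|A_n)\big)=\Sigma^{2^n-1}$. Here $P$ is the projection from the overall alphabet of $A_1\|\cdots\|A_n$ to $\Sigma$.
   Context: A nondeterministic finite automaton is $A=(Q,\Sigma,\delta,I,F)$ with transition function $\delta\colon Q\times\Sigma\to 2^Q$, nonempty set of initial states $I$, and set of marked states $F$. Its recognized (marked) language is $L_m(A)=\{w\mid \delta(I,w)\cap F\neq\emptyset\}$. The parallel composition $A_1\|\cdots\|A_n$ is the synchronous product, defined as follows. Its alphabet is the union of the alphabets, and its states are tuples of states. On an event, all components whose alphabet contains that event move simultaneously; the other components stay unchanged. The initial states are the tuples of initial states, and the marked states are the tuples of marked states. The projection $P$ onto $\Sigma$ is the morphism that erases events not in $\Sigma$ and keeps events in $\Sigma$. *)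

(* Defs.v *)
From mathcomp Require Import all_boot.
Set Implicit Arguments. Unset Strict Implicit. Unset Printing Implicit Defensive.

(* Its own alphabet is [alph], a finite subset of E; the transition
   function is only meaningful on events of [alph] (values on other
   events are never used). *)
Record nfa (E : finType) := NFA {
  st : finType;
  alph : {set E};
  delta : st -> E -> {set st};
  init : {set st};
  marked : {set st};
  init_nonempty : init != set0
}.

Section NFA.
Variable E : finType.

Fixpoint delta_star (A : nfa E) (Q : {set st A}) (w : seq E) : {set st A} :=
  match w with
  | [::] => Q
  | e :: w' => delta_star (\bigcup_(q in Q) delta q e) w'
  end.

Definition Lm (A : nfa E) (w : seq E) : Prop :=
  all (fun e => e \in alph A) w /\ delta_star (init A) w :&: marked A != set0.

Definition comp_alph n (A : 'I_n -> nfa E) : {set E} := \bigcup_i alph (A i).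

Definition comp_st n (A : 'I_n -> nfa E) : finType :=
  {dffun forall i : 'I_n, st (A i)}.

Definition comp_delta n (A : 'I_n -> nfa E) (q : comp_st A) (e : E)
  : {set comp_st A} :=
  [set q' : comp_st A | [forall i,
     if e \in alph (A i) then q' i \in delta (q i) e else q' i == q i]].

Definition comp_init n (A : 'I_n -> nfa E) : {set comp_st A} :=
  [set q : comp_st A | [forall i, q i \in init (A i)]].

Definition comp_marked n (A : 'I_n -> nfa E) : {set comp_st A} :=
  [set q : comp_st A | [forall i, q i \in marked (A i)]].

Lemma comp_init_nonempty n (A : 'I_n -> nfa E) : comp_init A != set0.
Proof.
have h i : {x : st (A i) | x \in init (A i)}.
  case: (pickP (mem (init (A i)))) => [x hx|h0]; first by exists x.
  exfalso; move: (init_nonempty (A i)); case/set0Pn=> x hx.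
  by move: (h0 x); rewrite /= hx.
apply/set0Pn; exists [ffun i => sval (h i)].
rewrite inE; apply/forallP=> /= i.
by rewrite ffunE; case: (h i).
Qed.

Definition par_comp n (A : 'I_n -> nfa E) : nfa E :=
  @NFA E (comp_st A) (comp_alph A) (@comp_delta n A) (comp_init A)
       (comp_marked A) (comp_init_nonempty A).

End NFA.

(* The overall event set is Σ + X; projection P onto Σ erases events not in Σ. *)
Definition proj (S X : Type) (w : seq (S + X)) : seq S :=
  pmap (fun e => match e with inl s => Some s | inr _ => None end) w.

(* Main.v *)
Require Import Defs.
From mathcomp Require Import all_boot zify.
Set Implicit Arguments. Unset Strict Implicit. Unset Printing Implicit Defensive.

Definition Ev (S : finType) (n : nat) := (S + 'I_n)%type.

Definition incr_ev S n (i : 'I_n) (e : Ev S n) : bool :=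
  match e with inl _ => i == 0 :> nat | inr j => j.+1 == i :> nat end.
Definition cout_ev S n (i : 'I_n) (e : Ev S n) : bool :=
  match e with inl _ => false | inr j => (j == i :> nat) && (i.+1 < n) end.
Definition alphi S n (i : 'I_n) : {set Ev S n} :=
  [set e | incr_ev i e || match e with inl _ => false | inr j => j == i :> nat end].
Definition deltai S n (i : 'I_n) (q : 'I_6) (e : Ev S n) : {set 'I_6} :=
  if incr_ev i e then (if q < 2 then [set inord q.+1] else set0)
  else if cout_ev i e then (if q == 2 :> nat then [set ord0] else set0) else set0.
Lemma init6 : [set ord0 : 'I_6] != set0.
Proof. by apply/set0Pn; exists ord0; rewrite inE. Qed.
Definition mkA S n (i : 'I_n) : nfa (Ev S n) :=
  @NFA (Ev S n) 'I_6 (@alphi S n i) (@deltai S n i) [set ord0] [set inord 1] init6.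

Definition V S n (q : comp_st (@mkA S n)) : nat := \sum_(i < n) (q i : 'I_6) * 2 ^ i.
Definition D S n (q : comp_st (@mkA S n)) : nat := \sum_(i < n) ((q i : 'I_6) : nat).

Lemma sum_upd n (a b : 'I_n -> nat) k : (forall i, i != k -> a i = b i) ->
  \sum_i a i + b k = \sum_i b i + a k.
Proof.
move=> h; rewrite (bigD1 k) // [X in _ = X + _](bigD1 k) //=.
rewrite (eq_bigr b); first lia.
by move=> i /h.
Qed.

Lemma sum_exp2 n : \sum_(i < n) 2 ^ i = 2 ^ n - 1.
Proof.
elim: n => [|n IH]; first by rewrite big_ord0.
rewrite big_ord_recr /= IH expnS.
have := expn_gt0 2 n; lia.
Qed.

Lemma delta_star_mono E (A : nfa E) (Q Q' : {set st A}) w :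
  Q \subset Q' -> delta_star Q w \subset delta_star Q' w.
Proof.
elim: w Q Q' => [|e w IH] Q Q' h //=.
apply: IH; apply/subsetP => x /bigcupP [q hq hx].
by apply/bigcupP; exists q => //; apply: (subsetP h).
Qed.

Lemma inordS (x : 'I_6) : x < 2 -> (inord x.+1 : 'I_6) = x.+1 :> nat.
Proof. by move=> h; rewrite inordK //; lia. Qed.

Lemma step_V S n (hn : 0 < n) (p q : comp_st (@mkA S n)) e :
  q \in comp_delta p e -> V q = V p + (if e is inl _ then 1 else 0).
Proof.
rewrite inE => /forallP h.
case: e h => [s|j] h.
- pose k := Ordinal hn.
  have hk := h k; rewrite /= inE /= /deltai /= in hk.
  case: ifP hk => [lt2|_]; last by rewrite inE.
  rewrite inE => /eqP hk.
  have := @sum_upd n (fun i => (q i : 'I_6) * 2 ^ i) (fun i => (p i : 'I_6) * 2 ^ i) k.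
  rewrite /V /= hk inordS // expn0 => H; rewrite muln1 in H.
  suff E : forall i : 'I_n, i != k -> (q i : 'I_6) * 2 ^ i = (p i : 'I_6) * 2 ^ i.
    by have := H E; lia.
  move=> i hi; have := h i; rewrite /= inE /=.
  have -> : (nat_of_ord i == 0) = false.
    by apply/negbTE; apply: contra hi => /eqP hi0; apply/eqP/val_inj.
  by move=> /eqP ->.
- have hj := h j; rewrite /= inE /= eqxx orbT /deltai /= eqxx /= in hj.
  rewrite (_ : (j.+1 == j) = false) in hj; last by lia.
  rewrite /=.
  case: (ltnP j.+1 n) hj => hjn; last by rewrite /= inE.
  rewrite /=; case: ifP => [p2|_]; last by rewrite inE.
  rewrite inE => /eqP qj.
  pose k := Ordinal hjn.
  have hk := h k; rewrite /= inE /= /deltai /= eqxx /= in hk.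
  case: ifP hk => [lt2|_]; last by rewrite inE.
  rewrite inE => /eqP hk.
  pose c i := if i == j then (q i : 'I_6) * 2 ^ i else (p i : 'I_6) * 2 ^ i.
  have kj : k != j by apply/eqP => /(f_equal val) /=; lia.
  have E1 : forall i, i != k -> (q i : 'I_6) * 2 ^ i = c i.
    move=> i ik; rewrite /c; case: eqP => // ij.
    have := h i; rewrite /= inE /= /deltai.
    have -> : (nat_of_ord j == i) = false by apply/eqP => /val_inj e; apply: ij.
    have -> : (j.+1 == i) = false by apply/negbTE; apply: contra ik => /eqP e; apply/eqP/val_inj.
    by move=> /eqP ->.
  have E2 : forall i, i != j -> c i = (p i : 'I_6) * 2 ^ i by move=> i /negbTE; rewrite /c => ->.
  have := @sum_upd n (fun i => (q i : 'I_6) * 2 ^ i) c k E1.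
  have := @sum_upd n c (fun i => (p i : 'I_6) * 2 ^ i) j E2.
  rewrite /c /V /= hk inordS // (negbTE kj) eqxx qj /= (eqP p2) expnS.
  lia.
Qed.

Lemma run_V S n (hn : 0 < n) (Q : {set comp_st (@mkA S n)}) w (q : comp_st (@mkA S n)) :
  q \in @delta_star _ (par_comp (@mkA S n)) Q w -> exists2 q0, q0 \in Q & V q = V q0 + size (proj w).
Proof.
elim: w Q => [|e w IH] Q /=; first by move=> h; exists q => //; rewrite addn0.
move=> /IH [q1 /bigcupP [p hp hq1] ->].
exists p => //; rewrite (step_V hn hq1).
case: e {hq1} => [s|j] /=; lia.
Qed.

Lemma run_cons E (A : nfa E) (q q' : st A) e w :
  q' \in delta q e -> delta_star [set q'] w :&: marked A != set0 ->
  delta_star [set q] (e :: w) :&: marked A != set0.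
Proof.
move=> hq /set0Pn [x]; rewrite inE => /andP [hx hm].
apply/set0Pn; exists x; rewrite inE hm andbT /=.
apply: (subsetP (delta_star_mono _ _)) hx.
apply/subsetP => y; rewrite inE => /eqP ->.
by apply/bigcupP; exists q; rewrite ?inE.
Qed.

Lemma sum_upd2 n (a b : 'I_n -> nat) j k : j != k ->
  (forall i, i != j -> i != k -> a i = b i) ->
  \sum_i a i + b j + b k = \sum_i b i + a j + a k.
Proof.
move=> jk h.
pose c i := if i == j then a i else b i.
have E1 := @sum_upd n a c k.
have E2 := @sum_upd n c b j.
have : \sum_i a i + c k = \sum_i c i + a k.
  apply: E1 => i ik; rewrite /c; case: eqP => // /eqP ij; exact: h.
have : \sum_i c i + b j = \sum_i b i + c j.
  apply: E2 => i /negbTE ij; by rewrite /c ij.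
rewrite /c eqxx eq_sym (negbTE jk); lia.
Qed.

Lemma final S n (q : comp_st (@mkA S n)) :
  (forall i, (q i : 'I_6) <= 1) -> V q = 2 ^ n - 1 -> q \in comp_marked (@mkA S n).
Proof.
move=> hq hV; rewrite inE; apply/forallP => i /=; rewrite inE.
have : (q i : 'I_6) != 0 :> nat.
  apply/negP => /eqP qi0.
  have h2 := sum_exp2 n; rewrite (bigD1 i) //= in h2.
  have h1 : V q + 2 ^ i <= 2 ^ n - 1.
    rewrite -h2 addnC leq_add2l.
    rewrite /V (bigD1 i) //= qi0 mul0n add0n; apply: leq_sum => k _.
    by rewrite -{2}[2 ^ k]mul1n leq_mul2r hq orbT.
  have hp : 0 < 2 ^ i by rewrite expn_gt0.
  lia.
have := hq i => hq1 h3.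
apply/eqP/val_inj; rewrite /= inordK //; move: hq1 h3; case: (q i) => [[|[|m]] hm] //=.
Qed.

Lemma le_D S n (q : comp_st (@mkA S n)) i : (q i : 'I_6) <= D q.
Proof. by rewrite /D (bigD1 i) //= leq_addr. Qed.

Lemma complete S n (hn : 0 < n) N : forall (q : comp_st (@mkA S n)) (w : seq S),
  (forall i, (q i : 'I_6) <= 2) -> V q + size w = 2 ^ n - 1 ->
  D q + 2 * size w <= N ->
  exists v, proj v = w /\
    @delta_star _ (par_comp (@mkA S n)) [set q] v :&: comp_marked (@mkA S n) != set0.
Proof.
elim: N => [|N IH] q w hq hV hD.
  have hw : w = [::] by move: hD; case: w {hV} => //= a w; rewrite mulnS; lia.
  subst w; exists [::]; split => //=.
  have hm : q \in comp_marked (@mkA S n).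
    apply: final; last by rewrite -hV addn0.
    by move=> i; have := le_D q i; lia.
  by apply/set0Pn; exists q; rewrite inE set11 hm.
case: (pickP (fun i => 2 <= (q i : 'I_6))) => [i0 hi0 | hno].
  case: (@arg_maxnP _ i0 (fun i => 2 <= (q i : 'I_6)) (fun i : 'I_n => val i) hi0) => j hj hmax.
  have hq2 : (q j : 'I_6) = 2 :> nat by have := hq j; move: hj => /=; lia.
  have hVj : (q j : 'I_6) * 2 ^ j <= V q by rewrite /V (bigD1 j) //= leq_addr.
  have hjn : j.+1 < n.
    rewrite ltn_neqAle ltn_ord andbT; apply/eqP => hjn.
    move: hVj; rewrite hq2 -expnS hjn => hVj.
    have : 0 < 2 ^ n by rewrite expn_gt0.
    lia.
  pose k := Ordinal hjn.
  have hk : (q k : 'I_6) < 2.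
    rewrite ltnNge; apply/negP => hk; have := hmax k hk; rewrite /=; lia.
  have jk : j != k by apply/eqP => /(f_equal val) /=; lia.
  pose q' : comp_st (@mkA S n) := [ffun i => if i == j then (ord0 : 'I_6)
      else if i == k then inord (q i : 'I_6).+1 else q i].
  have hstep : q' \in comp_delta q (inr j).
    rewrite inE; apply/forallP => i /=; rewrite inE /= /deltai /= /q' ffunE.
    case: (eqVneq i j) => [->|ij].
      rewrite eqxx orbT /= (_ : (j.+1 == j) = false); last by lia.
      by rewrite hjn hq2 inE.
    case: (eqVneq i k) => [->|ik].
      by rewrite /= eqxx /= hk inE.
    rewrite (_ : (j.+1 == i) = false); last first.
      by apply/negbTE; apply: contra ik => /eqP e; apply/eqP/val_inj.
    rewrite (_ : (nat_of_ord j == i) = false) /= ?eqxx //.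
    by apply/negbTE; apply: contra ij => /eqP e; apply/eqP/val_inj.
  have hV' := step_V hn hstep.
  have hD' : D q' + 1 = D q.
    have E : forall i, i != j -> i != k -> ((q' i : 'I_6) : nat) = (q i : 'I_6).
      by move=> i /negbTE ij /negbTE ik; rewrite ffunE ij ik.
    have := @sum_upd2 n (fun i => (q' i : 'I_6) : nat) (fun i => (q i : 'I_6) : nat) j k jk E.
    rewrite /D /q' /= !ffunE eqxx /=. rewrite eq_sym (negbTE jk) eqxx inordS // hq2.
    lia.
  have [v [hv hrun]] : exists v, proj v = w /\
    @delta_star _ (par_comp (@mkA S n)) [set q'] v :&: comp_marked (@mkA S n) != set0.
    apply: IH.
    - move=> i; rewrite /q' ffunE; case: eqP => // _; case: eqP => [->|_].
        by rewrite inordS.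
      exact: hq.
    - by rewrite hV' addn0.
    - lia.
  exists (inr j :: v); split => //.
  exact: (run_cons (A := par_comp (@mkA S n)) hstep).
have hq1 : forall i, (q i : 'I_6) <= 1.
  by move=> i; have := hno i; have := hq i; rewrite /=; lia.
case: w hV hD => [|s w] hV hD.
  exists [::]; split => //=.
  have hm : q \in comp_marked (@mkA S n) by apply: final; rewrite // -hV addn0.
  by apply/set0Pn; exists q; rewrite inE set11 hm.
pose k := Ordinal hn.
have hk : (q k : 'I_6) < 2 by have := hq1 k; lia.
pose q' : comp_st (@mkA S n) := [ffun i => if i == k then inord (q i : 'I_6).+1 else q i].
have hstep : q' \in comp_delta q (inl s).
  rewrite inE; apply/forallP => i /=; rewrite inE /= /deltai /= /q' ffunE.
  case: (eqVneq i k) => [->|ik].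
    by rewrite /= hk inE.
  rewrite (_ : (nat_of_ord i == 0) = false) /= ?eqxx //.
  by apply/negbTE; apply: contra ik => /eqP e; apply/eqP/val_inj.
have hV' := step_V hn hstep.
have hD' : D q' = D q + 1.
  have E : forall i, i != k -> ((q' i : 'I_6) : nat) = (q i : 'I_6).
    by move=> i /negbTE ik; rewrite ffunE ik.
  have := @sum_upd n (fun i => (q' i : 'I_6) : nat) (fun i => (q i : 'I_6) : nat) k E.
  rewrite /D /q' /= !ffunE eqxx inordS //.
  lia.
have [v [hv hrun]] : exists v, proj v = w /\
  @delta_star _ (par_comp (@mkA S n)) [set q'] v :&: comp_marked (@mkA S n) != set0.
  apply: IH.
  - move=> i; rewrite /q' ffunE; case: eqP => [->|_]; last exact: hq.
    by rewrite inordS.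
  - move: hV; rewrite hV' /=; lia.
  - move: hD; rewrite hD' /=; lia.
exists (inl s :: v); split; first by rewrite /= hv.
exact: (run_cons (A := par_comp (@mkA S n)) hstep).
Qed.

Theorem lemma8 (S : finType) (n : nat) (hn : 1 <= n) :
  exists (X : finType) (A : 'I_n -> nfa (S + X)%type),
    (forall i, #|st (A i)| = 6) /\
    (forall w : seq S,
       (exists v : seq (S + X), Lm (par_comp A) v /\ proj v = w) <->
       size w = 2 ^ n - 1).
Proof.
exists ('I_n : finType), (@mkA S n); split.
  by move=> i; rewrite /= card_ord.
move=> w; split.
  move=> [v [[_ hne] <-]].
  case/set0Pn: hne => q; rewrite inE => /andP [hrun hm].
  have [q0 hq0 hV] := run_V hn hrun.
  have V0 : V q0 = 0.
    rewrite /V big1 // => i _.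
    move: hq0; rewrite inE => /forallP /(_ i); rewrite inE => /eqP -> //.
  have V1 : V q = 2 ^ n - 1.
    rewrite /V -sum_exp2; apply: eq_bigr => i _.
    move: hm; rewrite inE => /forallP /(_ i); rewrite inE => /eqP ->.
    by rewrite inordK // mul1n.
  by rewrite -V1 hV V0.
move=> hw.
pose q0 : comp_st (@mkA S n) := [ffun i => (ord0 : 'I_6)].
have [|||v [hv hrun]] := @complete S n hn (D q0 + 2 * size w) q0 w.
- by move=> i; rewrite ffunE.
- rewrite /V big1 // => i _; by rewrite ffunE.
- by [].
exists v; split => //; split.
  apply/allP => e _; apply/bigcupP; case: e => [s|j].
    by exists (Ordinal hn) => //; rewrite inE /= ?eqxx.
  by exists j => //; rewrite inE /= eqxx orbT.
case/set0Pn: hrun => x; rewrite inE => /andP [hx hm].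
apply/set0Pn; exists x; rewrite inE hm andbT.
apply: (subsetP (delta_star_mono _ _)) hx.
apply/subsetP => y; rewrite inE => /eqP ->.
rewrite inE; apply/forallP => i; by rewrite ffunE inE.
Qed.
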